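(* Let $R$ be a Hilbert ring, i.e. a ring in which every prime ideal is an intersection of maximal ideals. Then $R$ is feckly clean if and only if $\operatorname{Max}(R)$ is strongly zero-dimensional.
   Context: Rings are associative with identity, not necessarily commutative; ideals are two-sided; $J(R)$ is the Jacobson radical. An element $u\in R$ is full if $RuR=R$. An element $a\in R$ is feckly clean if there exist $e\in R$ and a full element $u\in R$ with $a=e+u$ and $eR(1-e)\subseteq J(R)$; $R$ is feckly clean if every element is feckly clean. $\operatorname{Max}(R)$ is the set of all maximal ideals of $R$, topologized so that the closed sets are exactly the sets $V(I)=\{P\in\operatorname{Max}(R): I\subseteq P\}$ for ideals $I$. A topological space $X$ is strongly zero-dimensional if for any two disjoint closed sets $A,B\subseteq X$ there exist disjoint clopen sets $C_1,C_2$ with $A\subseteq C_1$ and $B\subseteq C_2$. *)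

(* Defs.v *)
(* Rings: associative with identity, possibly noncommutative
   (pzRingType also allows the zero ring). Subsets of R are Prop predicates. *)
From HB Require Import structures.
From mathcomp Require Import all_boot all_order all_algebra.
Set Implicit Arguments. Unset Strict Implicit. Unset Printing Implicit Defensive.
Import GRing.Theory.
Local Open Scope ring_scope.

Section Defs.
Variable R : pzRingType.

Definition ideal (I : R -> Prop) : Prop :=
  I 0 /\ (forall x y, I x -> I y -> I (x + y)) /\ (forall x, I x -> I (- x)) /\
  (forall r x, I x -> I (r * x)) /\ (forall r x, I x -> I (x * r)).

Definition left_ideal (I : R -> Prop) : Prop :=
  I 0 /\ (forall x y, I x -> I y -> I (x + y)) /\ (forall x, I x -> I (- x)) /\
  (forall r x, I x -> I (r * x)).

Definition proper (I : R -> Prop) : Prop := ~ I 1.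

Definition maximal_ideal (M : R -> Prop) : Prop :=
  ideal M /\ proper M /\
  forall I, ideal I -> proper I -> (forall x, M x -> I x) -> forall x, I x -> M x.

Definition maximal_left_ideal (M : R -> Prop) : Prop :=
  left_ideal M /\ proper M /\
  forall I, left_ideal I -> proper I -> (forall x, M x -> I x) -> forall x, I x -> M x.

Definition prime_ideal (P : R -> Prop) : Prop :=
  ideal P /\ proper P /\
  forall I J, ideal I -> ideal J -> (forall a b, I a -> J b -> P (a * b)) ->
    (forall a, I a -> P a) \/ (forall b, J b -> P b).

Definition jacobson (x : R) : Prop :=
  forall L, maximal_left_ideal L -> L x.

Definition hilbert_ring : Prop :=
  forall P, prime_ideal P ->
    forall x, (forall M, maximal_ideal M -> (forall y, P y -> M y) -> M x) -> P x.

(* u is full: RuR = R, i.e. 1 is a finite sum of elements a*u*b *)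
Definition full (u : R) : Prop :=
  exists s : seq (R * R), \sum_(p <- s) p.1 * u * p.2 = 1.

Definition feckly_clean_elt (a : R) : Prop :=
  exists e u, full u /\ a = e + u /\ forall r, jacobson (e * r * (1 - e)).

Definition feckly_clean : Prop := forall a, feckly_clean_elt a.

(* Max(R) with the hull-kernel topology. A subset of Max(R) is represented by
   a predicate on (R -> Prop), only its values on maximal ideals matter. *)
Definition V (I : R -> Prop) (P : R -> Prop) : Prop := forall x, I x -> P x.

Definition max_closed (A : (R -> Prop) -> Prop) : Prop :=
  exists I, ideal I /\ forall P, maximal_ideal P -> (A P <-> V I P).

Definition max_clopen (C : (R -> Prop) -> Prop) : Prop :=
  max_closed C /\ max_closed (fun P => ~ C P).

Definition max_subset (A B : (R -> Prop) -> Prop) : Prop :=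
  forall P, maximal_ideal P -> A P -> B P.

Definition max_disjoint (A B : (R -> Prop) -> Prop) : Prop :=
  forall P, maximal_ideal P -> A P -> B P -> False.

Definition Max_strongly_zero_dim : Prop :=
  forall A B, max_closed A -> max_closed B -> max_disjoint A B ->
    exists C1 C2, max_clopen C1 /\ max_clopen C2 /\ max_disjoint C1 C2 /\
      max_subset A C1 /\ max_subset B C2.

End Defs.

(* Main.v *)
Require Import Defs.
From mathcomp Require Import all_boot all_order all_algebra.
From mathcomp Require Import boolp classical_sets.
Require Import Defs.
Set Implicit Arguments. Unset Strict Implicit. Unset Printing Implicit Defensive.
Import GRing.Theory.
Local Open Scope ring_scope.

Lemma id0 (R : pzRingType) (I : R -> Prop) : ideal I -> I 0.
Proof. by case. Qed.
Lemma idD (R : pzRingType) (I : R -> Prop) x y : ideal I -> I x -> I y -> I (x + y).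
Proof. by case=> _ [H _]; apply: H. Qed.
Lemma idN (R : pzRingType) (I : R -> Prop) x : ideal I -> I x -> I (- x).
Proof. by case=> _ [_ [H _]]; apply: H. Qed.
Lemma idMl (R : pzRingType) (I : R -> Prop) r x : ideal I -> I x -> I (r * x).
Proof. by case=> _ [_ [_ [H _]]]; apply: H. Qed.
Lemma idMr (R : pzRingType) (I : R -> Prop) r x : ideal I -> I x -> I (x * r).
Proof. by case=> _ [_ [_ [_ H]]]; apply: H. Qed.
Lemma idB (R : pzRingType) (I : R -> Prop) x y : ideal I -> I x -> I y -> I (x - y).
Proof. by move=> hI hx hy; apply: idD => //; apply: idN. Qed.

Lemma ideal_left (R : pzRingType) (I : R -> Prop) : ideal I -> left_ideal I.
Proof. by case=> a [b [c [d _]]]. Qed.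

Lemma sum_in (R : pzRingType) (P : R -> Prop) (T : Type) (s : seq T) (F : T -> R) :
  P 0 -> (forall x y, P x -> P y -> P (x + y)) -> (forall p, P (F p)) ->
  P (\sum_(p <- s) F p).
Proof.
move=> h0 hD hF; elim: s => [|p s IH]; first by rewrite big_nil.
by rewrite big_cons; apply: hD.
Qed.

Definition gen (R : pzRingType) (x : R) : R -> Prop :=
  fun y => exists s : seq (R * R), y = \sum_(p <- s) p.1 * x * p.2.

Lemma gen_ideal (R : pzRingType) (x : R) : ideal (gen x).
Proof.
split; first by exists [::]; rewrite big_nil.
split; first by move=> a b [s1 ->] [s2 ->]; exists (s1 ++ s2); rewrite big_cat.
split.
  move=> a [s ->]; exists (map (fun p => (- p.1, p.2)) s).
  by rewrite big_map -sumrN; apply: eq_bigr => p _ /=; rewrite !mulNr.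
split.
  move=> r a [s ->]; exists (map (fun p => (r * p.1, p.2)) s).
  by rewrite big_map mulr_sumr; apply: eq_bigr => p _ /=; rewrite !mulrA.
move=> r a [s ->]; exists (map (fun p => (p.1, p.2 * r)) s).
by rewrite big_map mulr_suml; apply: eq_bigr => p _ /=; rewrite !mulrA.
Qed.

Lemma gen_self (R : pzRingType) (x : R) : gen x x.
Proof. by exists [:: (1, 1)]; rewrite big_cons big_nil addr0 mul1r mulr1. Qed.

Lemma gen_sub (R : pzRingType) (P : R -> Prop) (x : R) :
  ideal P -> P x -> forall y, gen x y -> P y.
Proof.
move=> hP hx y [s ->]; apply: sum_in.
- exact: id0 hP.
- by move=> ? ?; apply: idD.
- by move=> p; apply: idMr => //; apply: idMl.
Qed.

Lemma V_gen (R : pzRingType) (P : R -> Prop) (x : R) : ideal P -> (V (gen x) P <-> P x).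
Proof. by move=> hP; split; [apply; apply: gen_self | move=> hx; apply: gen_sub]. Qed.

Definition addI (R : pzRingType) (I K : R -> Prop) : R -> Prop :=
  fun y => exists a b, I a /\ K b /\ y = a + b.

Lemma addI_ideal (R : pzRingType) (I K : R -> Prop) : ideal I -> ideal K -> ideal (addI I K).
Proof.
move=> hI hK.
split; first by exists 0, 0; rewrite addr0; split; [apply: id0|split; [apply: id0|]].
split.
  move=> x y [a [b [ha [hb ->]]]] [a' [b' [ha' [hb' ->]]]].
  exists (a + a'), (b + b'); split; first exact: idD.
  by split; [exact: idD | rewrite addrACA].
split.
  move=> x [a [b [ha [hb ->]]]]; exists (- a), (- b).
  by split; [exact: idN|split; [exact: idN|rewrite opprD]].
split.
  move=> r x [a [b [ha [hb ->]]]]; exists (r * a), (r * b).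
  by split; [exact: idMl|split; [exact: idMl|rewrite mulrDr]].
move=> r x [a [b [ha [hb ->]]]]; exists (a * r), (b * r).
by split; [exact: idMr|split; [exact: idMr|rewrite mulrDl]].
Qed.

Definition chain_closed (R : pzRingType) (K : (R -> Prop) -> Prop) :=
  forall C : (R -> Prop) -> Prop, (forall N, C N -> K N) -> (exists N, C N) ->
  (forall N1 N2, C N1 -> C N2 -> (forall x, N1 x -> N2 x) \/ (forall x, N2 x -> N1 x)) ->
  K (fun x => exists N, C N /\ N x).

Lemma zorn_ext (R : pzRingType) (K : (R -> Prop) -> Prop) (I : R -> Prop) :
  chain_closed K -> K I -> proper I ->
  exists M, K M /\ proper M /\ (forall x, I x -> M x) /\
    forall N, K N -> proper N -> (forall x, M x -> N x) -> forall x, N x -> M x.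
Proof.
move=> hK KI pI.
pose P := fun N : R -> Prop => K N /\ proper N /\ (forall x, I x -> N x).
pose T := {N : R -> Prop | P N}.
pose Rl := fun a b : T => `[< forall x, sval a x -> sval b x >].
have := @Zorn T Rl.
case.
- by move=> t; apply/asboolP.
- by move=> r s t /asboolP h1 /asboolP h2; apply/asboolP => x /h1 /h2.
- move=> [s ps] [t pt] /asboolP /= h1 /asboolP /= h2; apply: eq_exist.
  by apply/funext => x; apply/propext; split; [apply: h1|apply: h2].
- move=> A totA.
  case: (pselect (exists t, A t)) => [[t0 At0]|nA]; last first.
    have pI' : P I by split=> //; split.
    by exists (exist _ I pI') => s As; exfalso; apply: nA; exists s.
  pose C := fun N : R -> Prop => exists t : T, A t /\ sval t = N.
  have pU : P (fun x => exists N, C N /\ N x).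
    split.
      apply: hK.
      - by move=> N [t [_ <-]]; case: (svalP t).
      - by exists (sval t0), t0.
      - move=> N1 N2 [t1 [A1 <-]] [t2 [A2 <-]].
        by case: (totA _ _ A1 A2) => /asboolP h; [left|right].
    split.
      move=> [N [[t [At <-]] h1]]; by case: (svalP t) => _ [].
    move=> x Ix; exists (sval t0); split; first by exists t0.
    by case: (svalP t0) => _ [_]; apply.
  exists (exist _ _ pU) => s As; apply/asboolP => x sx /=.
  by exists (sval s); split=> //; exists s.
move=> t tmax; exists (sval t).
case: (svalP t) => Kt [pt It]; split=> //; split=> //; split=> //.
move=> N KN pN tN.
have pN' : P N by split=> //; split=> // x /It /tN.
have e : exist _ N pN' = t by apply: tmax; apply/asboolP.
by rewrite -e.
Qed.

Lemma lid0 (R : pzRingType) (I : R -> Prop) : left_ideal I -> I 0.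
Proof. by case. Qed.
Lemma lidD (R : pzRingType) (I : R -> Prop) x y : left_ideal I -> I x -> I y -> I (x + y).
Proof. by case=> _ [H _]; apply: H. Qed.
Lemma lidN (R : pzRingType) (I : R -> Prop) x : left_ideal I -> I x -> I (- x).
Proof. by case=> _ [_ [H _]]; apply: H. Qed.
Lemma lidMl (R : pzRingType) (I : R -> Prop) r x : left_ideal I -> I x -> I (r * x).
Proof. by case=> _ [_ [_ H]]; apply: H. Qed.

Lemma chain_left (R : pzRingType) : chain_closed (@left_ideal R).
Proof.
move=> C hC [N0 CN0] tot.
split; first by exists N0; split=> //; apply: lid0; apply: hC.
split.
  move=> x y [N1 [C1 h1]] [N2 [C2 h2]].
  case: (tot _ _ C1 C2) => s.
    by exists N2; split=> //; apply: lidD => //; [apply: hC | apply: s].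
  by exists N1; split=> //; apply: lidD => //; [apply: hC | apply: s].
split.
  by move=> x [N [CN h]]; exists N; split=> //; apply: lidN => //; apply: hC.
by move=> r x [N [CN h]]; exists N; split=> //; apply: lidMl => //; apply: hC.
Qed.

Lemma chain_ideal (R : pzRingType) : chain_closed (@ideal R).
Proof.
move=> C hC [N0 CN0] tot.
split; first by exists N0; split=> //; apply: id0; apply: hC.
split.
  move=> x y [N1 [C1 h1]] [N2 [C2 h2]].
  case: (tot _ _ C1 C2) => s.
    by exists N2; split=> //; apply: idD => //; [apply: hC | apply: s].
  by exists N1; split=> //; apply: idD => //; [apply: hC | apply: s].
split.
  by move=> x [N [CN h]]; exists N; split=> //; apply: idN => //; apply: hC.
split.
  by move=> r x [N [CN h]]; exists N; split=> //; apply: idMl => //; apply: hC.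
by move=> r x [N [CN h]]; exists N; split=> //; apply: idMr => //; apply: hC.
Qed.

Lemma exists_max (R : pzRingType) (I : R -> Prop) : ideal I -> proper I ->
  exists M, maximal_ideal M /\ forall x, I x -> M x.
Proof.
move=> hI pI; have [M [KM [pM [IM mM]]]] := zorn_ext (@chain_ideal R) hI pI.
by exists M; split.
Qed.

Lemma exists_maxl (R : pzRingType) (I : R -> Prop) : left_ideal I -> proper I ->
  exists M, maximal_left_ideal M /\ forall x, I x -> M x.
Proof.
move=> hI pI; have [M [KM [pM [IM mM]]]] := zorn_ext (@chain_left R) hI pI.
by exists M; split.
Qed.

Lemma full_iff (R : pzRingType) (u : R) :
  full u <-> forall M, maximal_ideal M -> ~ M u.
Proof.
split.
  move=> [s hs] M [hM [pM _]] Mu; apply: pM; rewrite -hs; apply: sum_in.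
  - exact: id0 hM.
  - by move=> ? ?; apply: idD.
  - by move=> p; apply: idMr => //; apply: idMl.
move=> h; case: (pselect (gen u 1)) => [[s hs]|n].
  by exists s; rewrite -hs.
have [M [hM sM]] := exists_max (gen_ideal u) n.
by exfalso; apply: (h M hM); apply: sM; apply: gen_self.
Qed.

Lemma maxl_span (R : pzRingType) (L : R -> Prop) (t : R) :
  maximal_left_ideal L -> ~ L t -> forall y, exists l c, L l /\ y = l + c * t.
Proof.
move=> [hL [pL mL]] nt.
pose T := fun y => exists l c, L l /\ y = l + c * t.
have hT : left_ideal T.
  split; first by exists 0, 0; rewrite mul0r addr0; split=> //; apply: lid0.
  split.
    move=> x y [l [c [hl ->]]] [l' [c' [hl' ->]]]; exists (l + l'), (c + c').
    by split; [apply: lidD | rewrite mulrDl addrACA].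
  split.
    move=> x [l [c [hl ->]]]; exists (- l), (- c).
    by split; [apply: lidN | rewrite opprD mulNr].
  move=> r x [l [c [hl ->]]]; exists (r * l), (r * c).
  by split; [apply: lidMl | rewrite mulrDr mulrA].
have LT : forall x, L x -> T x by move=> x hx; exists x, 0; rewrite mul0r addr0.
have T1 : T 1.
  case: (pselect (T 1)) => // n; exfalso; apply: nt.
  by apply: (mL T hT n LT); exists 0, 1; rewrite mul1r add0r; split=> //; exact: lid0 hL.
by move=> y; rewrite -[y]mulr1; exact: lidMl hT T1.
Qed.

Lemma maxI_span (R : pzRingType) (M : R -> Prop) (e : R) :
  maximal_ideal M -> ~ M e -> exists m (s : seq (R * R)), M m /\ 1 = m + \sum_(p <- s) p.1 * e * p.2.
Proof.
move=> [hM [pM mM]] ne.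
have hA := addI_ideal hM (gen_ideal e).
have MA : forall x, M x -> addI M (gen e) x.
  by move=> x hx; exists x, 0; rewrite addr0; split=> //; split=> //; apply: id0 (gen_ideal e).
case: (pselect (addI M (gen e) 1)) => [[m [b [hm [[s ->] h]]]]|n].
  by exists m, s.
exfalso; apply: ne; apply: (mM _ hA n MA); exists 0, e; rewrite add0r.
by split; [apply: id0|split=> //; apply: gen_self].
Qed.

Lemma colon_max (R : pzRingType) (L : R -> Prop) (s : R) :
  maximal_left_ideal L -> ~ L s -> maximal_left_ideal (fun r => L (r * s)).
Proof.
move=> hLm ns; have [hL [pL mL]] := hLm.
split.
  split; first by rewrite mul0r; exact: lid0 hL.
  split; first by move=> x y hx hy; rewrite /= mulrDl; exact: lidD hL hx hy.
  split; first by move=> x hx; rewrite /= mulNr; exact: lidN hL hx.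
  move=> r x /= hx; rewrite -mulrA.
exact: (@lidMl R L r (x * s) hL hx).
split; first by rewrite /proper mul1r.
move=> N hN pN sN n Nn.
case: (pselect (L (n * s))) => // nns; exfalso.
have [l [c [hl e]]] := maxl_span hLm nns s.
apply: pN.
have h1 : N (1 - c * n).
  apply: sN; rewrite mulrBl mul1r -mulrA.
  have -> : s - c * (n * s) = l by rewrite {1}e addrK.
  exact: hl.
rewrite -(subrK (c * n) 1); exact: lidD hN h1 (@lidMl _ _ c _ hN Nn).
Qed.

Lemma ann_ideal (R : pzRingType) (L : R -> Prop) :
  left_ideal L -> ideal (fun r => forall s, L (r * s)).
Proof.
move=> hL.
split; first by move=> s; rewrite mul0r; exact: lid0 hL.
split; first by move=> x y hx hy s; rewrite mulrDl; exact: lidD hL (hx s) (hy s).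
split; first by move=> x hx s; rewrite mulNr; exact: lidN hL (hx s).
split; first by move=> r x hx s; rewrite -mulrA; exact: (@lidMl _ _ r _ hL (hx s)).
by move=> r x hx s; rewrite -mulrA; exact: hx.
Qed.

Lemma jac_sub_max (R : pzRingType) (x : R) (M : R -> Prop) :
  jacobson x -> maximal_ideal M -> M x.
Proof.
move=> jx hMm; have [hM [pM mM]] := hMm.
have [L [hLm ML]] := exists_maxl (ideal_left hM) pM.
have [hL [pL _]] := hLm.
have hP := ann_ideal hL.
have pP : proper (fun r => forall s, L (r * s)).
  by move=> h; apply: pL; have := h 1; rewrite mulr1.
have MP : forall m, M m -> forall s, L (m * s).
  by move=> m hm s; apply: ML; apply: idMr.
apply: (mM _ hP pP MP) => s.
case: (pselect (L s)) => Ls; first exact: (@lidMl _ _ x _ hL Ls).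
exact: (jx _ (colon_max hLm Ls)).
Qed.

Lemma hilbert_jac (R : pzRingType) (x : R) : hilbert_ring R ->
  (forall M, maximal_ideal M -> M x) -> jacobson x.
Proof.
move=> hR hx L hLm; have [hL [pL mL]] := hLm.
have hP := ann_ideal hL.
have pP : proper (fun r => forall s, L (r * s)).
  by move=> h; apply: pL; have := h 1; rewrite mulr1.
have prP : prime_ideal (fun r => forall s, L (r * s)).
  split=> //; split=> //.
  move=> I J hI hJ hIJ.
  case: (pselect (forall b, J b -> forall s, L (b * s))) => hJP; [by right|left].
  have [b [Jb [s ns]]] : exists b, J b /\ exists s, ~ L (b * s).
    case: (pselect (exists b, J b /\ exists s, ~ L (b * s))) => // hn; exfalso.
    apply: hJP => b Jb s; case: (pselect (L (b * s))) => // hs; exfalso.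
    by apply: hn; exists b; split=> //; exists s.
  move=> a Ia s'.
  have [l [c [hl ->]]] := maxl_span hLm ns s'.
  rewrite mulrDr; apply: (lidD hL); first exact: (@lidMl _ _ a _ hL hl).
  rewrite mulrA mulrA -(mulrA a c b).
  exact: (hIJ _ _ Ia ((@idMl _ _ c _ hJ Jb))).
have := hR _ prP x (fun M hM _ => hx M hM).
by move=> /(_ 1); rewrite mulr1.
Qed.

Lemma max_dich (R : pzRingType) (e : R) (M : R -> Prop) :
  (forall r, jacobson (e * r * (1 - e))) -> maximal_ideal M -> M e \/ M (1 - e).
Proof.
move=> je hMm; have [hM _] := hMm.
case: (pselect (M e)) => Me; [by left|right].
have [m [s [hm e1]]] := maxI_span hMm Me.
rewrite -[1 - e]mul1r {1}e1 mulrDl mulr_suml; apply: (idD hM).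
  exact: (@idMr _ _ (1 - e) _ hM hm).
apply: sum_in; first exact: id0 hM.
  by move=> ? ?; apply: idD.
move=> p; rewrite -!mulrA; apply: (idMl p.1 hM); rewrite mulrA.
exact: jac_sub_max (je p.2) hMm.
Qed.

Lemma cl_pt (R : pzRingType) (x : R) : max_closed (fun P => P x).
Proof.
exists (gen x); split; first exact: gen_ideal.
by move=> P [hP _]; apply: iff_sym; apply: V_gen.
Qed.

Lemma two_in (R : pzRingType) (P : R -> Prop) (e : R) :
  maximal_ideal P -> P e -> P (1 - e) -> False.
Proof.
move=> [hP [pP _]] h1 h2; apply: pP; rewrite -(subrK e 1); exact: idD hP h2 h1.
Qed.

Theorem corollary3p4 (R : pzRingType) :
  hilbert_ring R -> (feckly_clean R <-> Max_strongly_zero_dim R).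
Proof.
move=> hR; split.
- move=> fc A B [I [hI AI]] [K [hK BK]] dAB.
  have IK1 : addI I K 1.
    case: (pselect (addI I K 1)) => // n; exfalso.
    have [M [hM sM]] := exists_max (addI_ideal hI hK) n.
    apply: (dAB M hM).
    + apply/(AI M hM) => x Ix; apply: sM; exists x, 0; rewrite addr0.
      by split=> //; split=> //; exact: id0 hK.
    + apply/(BK M hM) => x Kx; apply: sM; exists 0, x; rewrite add0r.
      by split=> //; exact: id0 hI.
  have [i [k [Ii [Kk e1]]]] := IK1.
  have [e [u [fu [ke je]]]] := fc k.
  have nu := (full_iff u).1 fu.
  have hk : k = 1 - i by rewrite e1 addrC addKr.
  have hu : u = k - e by rewrite ke addrC addKr.
  have ne1 : forall P, maximal_ideal P -> (~ P e <-> P (1 - e)).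
    move=> P hPm; split; first by case: (max_dich je hPm).
    by move=> h1 h2; apply: (two_in hPm h2 h1).
  have ne2 : forall P, maximal_ideal P -> (~ P (1 - e) <-> P e).
    move=> P hPm; split; first by case: (max_dich je hPm).
    by move=> h1 h2; apply: (two_in hPm h1 h2).
  exists (fun P => P e), (fun P => P (1 - e)).
  split.
    split; first exact: cl_pt.
    exists (gen (1 - e)); split; first exact: gen_ideal.
    move=> P hPm; apply: iff_trans (ne1 P hPm) _; apply: iff_sym; apply: V_gen.
    exact: hPm.1.
  split.
    split; first exact: cl_pt.
    exists (gen e); split; first exact: gen_ideal.
    move=> P hPm; apply: iff_trans (ne2 P hPm) _; apply: iff_sym; apply: V_gen.
    exact: hPm.1.
  split; first by move=> P hPm h1 h2; apply: (two_in hPm h1 h2).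
  split.
    move=> P hPm AP.
    have Pi : P i by apply: ((AI P hPm).1 AP).
    case: (pselect (P e)) => // n; exfalso.
    have P1e := (ne1 P hPm).1 n.
    apply: (nu P hPm); rewrite hu hk addrAC.
    exact: idB hPm.1 P1e Pi.
  move=> P hPm BP.
  have Pk : P k by apply: ((BK P hPm).1 BP).
  case: (pselect (P (1 - e))) => // n; exfalso.
  have Pe := (ne2 P hPm).1 n.
  apply: (nu P hPm); rewrite hu.
  exact: idB hPm.1 Pk Pe.
- move=> sz a.
  have dAB : max_disjoint (fun P => P a) (fun P => P (1 - a)).
    by move=> P hPm h1 h2; apply: (two_in hPm h1 h2).
  have [C1 [C2 [[[I [hI C1I]] [K [hK C1K]]] [_ [dC [AC1 BC2]]]]]] :=
    sz _ _ (cl_pt a) (cl_pt (1 - a)) dAB.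
  have IK1 : addI I K 1.
    case: (pselect (addI I K 1)) => // n; exfalso.
    have [M [hM sM]] := exists_max (addI_ideal hI hK) n.
    have c1 : C1 M.
      apply/(C1I M hM) => x Ix; apply: sM; exists x, 0; rewrite addr0.
      by split=> //; split=> //; exact: id0 hK.
    apply/(C1K M hM): c1 => x Kx; apply: sM; exists 0, x; rewrite add0r.
    by split=> //; exact: id0 hI.
  have [i [k [Ii [Kk e1]]]] := IK1.
  exists k, (a - k); split.
    apply/full_iff => M hM Mu.
    case: (pselect (C1 M)) => c1.
      have Mi : M i by apply: ((C1I M hM).1 c1).
      have h : 1 - a = i - (a - k) by rewrite {1}e1 opprB addrA.
      have M1a : M (1 - a) by rewrite h; exact: idB hM.1 Mi Mu.
      exact: (dC M hM c1 (BC2 M hM M1a)).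
    have Mk : M k by apply: ((C1K M hM).1 c1).
    have Ma : M a by rewrite -(subrK k a); exact: idD hM.1 Mu Mk.
    exact: (c1 (AC1 M hM Ma)).
  split; first by rewrite addrC subrK.
  move=> r; apply: hilbert_jac hR _ => M hM.
  have -> : 1 - k = i by rewrite {1}e1 addrK.
  case: (pselect (C1 M)) => c1.
    have Mi : M i by apply: ((C1I M hM).1 c1).
    exact: (@idMl _ _ (k * r) _ hM.1 Mi).
  have Mk : M k by apply: ((C1K M hM).1 c1).
  rewrite -mulrA; exact: (@idMr _ _ (r * i) _ hM.1 Mk).
Qed.
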